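(* Fix an integer $k\geq 3$. Let $\mathcal{A}$ be any deterministic LOCAL algorithm which, on every $k$-partially $k$-colorable graph (with any valid assignment of identifiers), outputs a $k$-partial $k$-coloring. For $n\ge 1$ let $T_{\mathcal{A}}(n)$ denote the maximum, over all $n$-vertex $k$-partially $k$-colorable graphs $G$ and all valid identifier assignments, of the number of rounds $\mathcal{A}$ uses on $G$. Then $T_{\mathcal{A}}(n)$ is not $o(n/k^3)$; that is, $T_{\mathcal{A}}(n)=\Omega(n/k^3)$ (for infinitely many $n$, with the implied constant independent of $n$), which for constant $k$ is $\Omega(n)$.
   Context: All graphs are finite, simple and undirected; $\deg_G(v)$ denotes the degree of $v$. For integers $k\geq 0$, $c\geq 1$, a $k$-partial $c$-coloring of $G=(V,E)$ is a map $\gamma:V\to\{1,\dots,c\}$ such that every vertex $v$ has at least $\min\{k,\deg_G(v)\}$ neighbors $u$ with $\gamma(u)\neq\gamma(v)$; $G$ is $k$-partially $c$-colorable if such a map exists. LOCAL model: the input graph $G$ on $n$ vertices is the communication network; each vertex has a distinct identifier from $\{1,\dots,n^d\}$ for a fixed constant $d\geq 1$ (a valid identifier assignment), initially knows only its identifier and the identifier range, and computation proceeds in synchronous rounds in which every vertex may send an arbitrarily large message to each neighbor, receive its neighbors' messages, and perform arbitrary local computation; after some number of rounds each vertex outputs (here, its color) and terminates. The complexity is the number of rounds. Equivalently, the output of a vertex after $t$ rounds is a function of its $t$-radius view: the subgraph of $G$ induced by the vertices at distance at most $t$ from it, together with their identifiers. *)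

(* Defs.v *)
From mathcomp Require Import all_boot.
Set Implicit Arguments. Unset Strict Implicit. Unset Printing Implicit Defensive.

(* Graphs on n vertices: vertex set 'I_n, adjacency e : rel 'I_n, assumed
   symmetric and irreflexive (finite simple undirected graph). *)

Definition degree (n : nat) (e : rel 'I_n) (v : 'I_n) : nat :=
  #|[set u | e v u]|.

Definition partial_coloring (k c n : nat) (e : rel 'I_n) (gamma : 'I_n -> 'I_c) : Prop :=
  forall v : 'I_n, minn k (degree e v) <= #|[set u | e v u & gamma u != gamma v]|.

Definition partially_colorable (k c n : nat) (e : rel 'I_n) : Prop :=
  exists gamma : 'I_n -> 'I_c, partial_coloring k e gamma.

(* Identifiers: values in 'I_(n^d).+1, restricted to be nonzero, i.e. in {1..n^d}. *)
Definition idT (d n : nat) := 'I_(n ^ d).+1.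

Definition valid_ids (d n : nat) (id : 'I_n -> idT d n) : Prop :=
  injective id /\ forall v, 0 < val (id v).

Fixpoint ball (n : nat) (e : rel 'I_n) (t : nat) (v : 'I_n) : {set 'I_n} :=
  match t with
  | 0 => [set v]
  | t'.+1 => let B := ball e t' v in B :|: [set u | [exists w in B, e w u]]
  end.

(* The t-radius view of v: the subgraph induced by the ball, together with
   identifiers. Since identifiers are distinct, this identifier-labelled rooted
   graph is represented canonically by (root id, set of ids in the ball,
   set of (ordered) id pairs forming edges of the induced subgraph). *)
Definition view (d n : nat) := (idT d n * {set idT d n} * {set idT d n * idT d n})%type.

Definition view_of (d n : nat) (e : rel 'I_n) (id : 'I_n -> idT d n) (t : nat) (v : 'I_n)
  : view d n :=
  (id v,
   [set id u | u in ball e t v],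
   [set (id u, id w) | u in ball e t v, w in [set w in ball e t v | e u w]]).

(* A deterministic LOCAL algorithm (for fixed k, d): a vertex knows the identifier
   range {1..n^d}, hence n.  After t rounds its state is a function of t and of its
   t-radius view; [A n t view = Some c] means it stops at round t with colour c,
   [None] means it continues.  The number of rounds used at v is the first t with
   [A n t (view_of ... t v) <> None]. *)
Definition local_alg (d k : nat) := forall n : nat, nat -> view d n -> option 'I_k.

Definition outputs_at (d k n : nat) (A : local_alg d k) (e : rel 'I_n)
  (id : 'I_n -> idT d n) (v : 'I_n) (t : nat) (c : 'I_k) : Prop :=
  A n t (view_of e id t v) = Some c /\
  forall s, s < t -> A n s (view_of e id s v) = None.

Definition solves_partial_coloring (d k : nat) (A : local_alg d k) : Prop :=
  forall (n : nat) (e : rel 'I_n), symmetric e -> irreflexive e ->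
    partially_colorable k k e ->
    forall id : 'I_n -> idT d n, valid_ids id ->
      exists gamma : 'I_n -> 'I_k,
        partial_coloring k e gamma /\
        forall v, exists t, outputs_at A e id v t (gamma v).

(* Main.v *)
Require Import Defs.
From mathcomp Require Import all_boot zify.
From Stdlib Require Import Classical.
Set Implicit Arguments. Unset Strict Implicit. Unset Printing Implicit Defensive.

Lemma ball_pot n (e : rel 'I_n) (p : 'I_n -> nat) :
  (forall x y, e x y -> p y <= (p x).+1) ->
  forall t v u, u \in ball e t v -> p u <= p v + t.
Proof.
move=> He; elim=> [|t IH] v u /=.
  by rewrite inE => /eqP ->; rewrite addn0.
rewrite !inE => /orP [/IH Hu|/existsP [w /andP [Hw Hwu]]].
  by rewrite addnS; apply: leqW.
have := He _ _ Hwu; have := IH _ _ Hw; lia.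
Qed.

Lemma ball_sub n (e : rel 'I_n) t v : ball e t v \subset ball e t.+1 v.
Proof. by rewrite /= subsetUl. Qed.

Lemma ball_mono n (e : rel 'I_n) t1 t2 v : t1 <= t2 -> ball e t1 v \subset ball e t2 v.
Proof.
move=> /subnK <-; elim: (t2 - t1) => [|m IH]; first by rewrite add0n.
by rewrite addSn; apply: subset_trans IH (ball_sub _ _ _).
Qed.

Lemma ball_eq n (e1 e2 : rel 'I_n) (S : {set 'I_n}) :
  (forall x y, x \in S -> e1 x y = e2 x y) ->
  forall t v, ball e1 t v \subset S -> ball e1 t v = ball e2 t v.
Proof.
move=> HS; elim=> [//|t IH] v Hsub.
have Hs : ball e1 t v \subset S := subset_trans (ball_sub _ _ _) Hsub.
rewrite /= -(IH _ Hs); congr (_ :|: _); apply/setP => u; rewrite !inE.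
apply/existsP/existsP => [] [w /andP [Hw Hwu]]; exists w; rewrite Hw /=.
  by rewrite -HS // (subsetP Hs).
by rewrite HS // (subsetP Hs).
Qed.

Lemma view_eq d n (e1 e2 : rel 'I_n) (S : {set 'I_n}) (id : 'I_n -> idT d n) t v :
  (forall x y, x \in S -> e1 x y = e2 x y) ->
  ball e1 t v \subset S -> view_of e1 id t v = view_of e2 id t v.
Proof.
move=> HS Hsub; rewrite /view_of -(ball_eq HS Hsub); congr (_, _).
apply/setP => z; apply/imset2P/imset2P => [] [u w Hu Hw ->]; exists u w => //;
  move: Hw; rewrite !inE => /andP [-> Hw] /=.
  by rewrite -HS // (subsetP Hsub).
by rewrite HS // (subsetP Hsub).
Qed.

Lemma nb_diff k c n (e : rel 'I_n) (gamma : 'I_n -> 'I_c) v u :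
  partial_coloring k e gamma -> degree e v <= k -> e v u -> gamma u != gamma v.
Proof.
move=> /(_ v) Hp Hd Hvu; move: Hp; rewrite /degree in Hd *.
rewrite (minn_idPr Hd) => Hc.
have Hs : [set u | e v u & gamma u != gamma v] \subset [set u | e v u].
  by apply/subsetP => x; rewrite !inE => /andP [].
have E : [set u | e v u & gamma u != gamma v] = [set u | e v u].
  by apply/eqP; rewrite eqEcard Hs.
have : u \in [set u | e v u] by rewrite inE.
by rewrite -E inE => /andP [].
Qed.

Lemma deg_le k m (e : rel 'I_m.+1) v (g : 'I_k -> nat) :
  (forall u, e v u -> exists j, val u = g j) -> degree e v <= k.
Proof.
move=> H; rewrite /degree.
apply: (@leq_trans #|[set inord (g j) | j : 'I_k] : {set 'I_m.+1}|).
  apply: subset_leq_card; apply/subsetP => u; rewrite inE => /H [j Hj].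
  by apply/imsetP; exists j => //; rewrite -Hj inord_val.
by apply: (leq_trans (leq_imset_card _ _)); rewrite card_ord.
Qed.

Lemma same_out d k n (A : local_alg d k) (e1 e2 : rel 'I_n) id v s t1 t2 c1 c2 :
  (forall r, r <= s -> view_of e1 id r v = view_of e2 id r v) ->
  A n s (view_of e1 id s v) <> None ->
  outputs_at A e1 id v t1 c1 -> outputs_at A e2 id v t2 c2 -> c1 = c2.
Proof.
move=> Hv Hs [H1 H1'] [H2 H2'].
have Ht1 : t1 <= s by rewrite leqNgt; apply/negP => /H1'.
case: (ltngtP t1 t2) => [lt|lt|eq].
- by move: (H2' _ lt); rewrite -Hv // H1.
- by move: (H1' _ lt); rewrite Hv ?H2 //; apply: leq_trans (ltnW lt) Ht1.
- by subst; move: H1; rewrite Hv // H2 => [[]].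
Qed.

Definition adjlt (k L : nat) (br : bool) (x y : nat) : bool :=
  if br && (x %/ k == L) then (x == k*L) && (y == k*L + k)
  else [&& x < y, y <= k * (x %/ k) + k & ~~ ((x %% k == 0) && (y == k*(x%/k) + k))].

Definition adj k L br x y := adjlt k L br x y || adjlt k L br y x.

Definition E k L br m : rel 'I_m := fun x y => adj k L br (val x) (val y).

Lemma dmd k q r : r < k -> (k*q + r) %/ k = q.
Proof. move=> H; rewrite mulnC divnMDl ?divn_small //; lia. Qed.
Lemma dmm k q r : r < k -> (k*q + r) %% k = r.
Proof. by move=> H; rewrite mulnC modnMDl modn_small. Qed.
Lemma dmu k q r q' r' : r < k -> r' < k -> k*q + r = k*q' + r' -> q = q' /\ r = r'.
Proof.
move=> H H' E; split; first by rewrite -(dmd q H) E dmd.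
by rewrite -(dmm q H) E dmm.
Qed.
Lemma dmkd k q : 0 < k -> (k*q + k) %/ k = q.+1.
Proof. by move=> H; rewrite -mulnSr mulKn. Qed.
Lemma dmkm k q : (k*q + k) %% k = 0.
Proof. by rewrite -mulnSr modnMr. Qed.
Lemma dec k x : 0 < k -> exists q r, r < k /\ x = k*q + r.
Proof. by move=> Hk; exists (x %/ k), (x %% k); rewrite ltn_pmod // mulnC -divn_eq. Qed.

Lemma shape k L x y : 0 < k -> adjlt k L false x y ->
  exists q r, r < k /\ x = k*q+r /\
   ((exists r', r < r' < k /\ y = k*q+r') \/ (0 < r /\ y = k*q+k)).
Proof.
move=> Hk; have [q [r [Hr ->]]] := dec x Hk.
rewrite /adjlt /= dmd // dmm // => /and3P [H1 H2 H3].
exists q, r; split=> //; split=> //.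
have [Hy|Hy] := ltnP y (k*q+k).
  left; exists (y - k*q); split; [apply/andP; split|]; lia.
right; split; last by lia.
have Ey : y = k*q+k by lia.
by move: H3; rewrite Ey eqxx andbT lt0n.
Qed.

Lemma adjlt_true k L x y : adjlt k L true x y =
  if x %/ k == L then (x == k*L) && (y == k*L + k) else adjlt k L false x y.
Proof. by rewrite /adjlt /=; case: (x %/ k == L). Qed.

Lemma blk_close k L x y : 0 < k -> adj k L false x y ->
  y %/ k <= (x %/ k).+1 /\ x %/ k <= (y %/ k).+1.
Proof.
move=> Hk.
have H : forall a b, adjlt k L false a b -> b %/ k <= (a %/ k).+1 /\ a %/ k <= (b %/ k).+1.
  move=> a b /(shape Hk) [q [r [Hr [-> [[r' [/andP [H1 H2] ->]]|[H1 ->]]]]]].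
    by rewrite !dmd //; lia.
  by rewrite dmkd // dmd //; lia.
by case/orP => /H; lia.
Qed.

Lemma agree k L x y : 0 < k -> (x %/ k < L \/ L.+2 <= x %/ k) ->
  adj k L false x y = adj k L true x y.
Proof.
move=> Hk Hx; rewrite /adj !adjlt_true.
have -> : (x %/ k == L) = false by apply/eqP; lia.
congr (_ || _); case: eqP => // Hy.
have -> : (y == k * L) && (x == k * L + k) = false.
  apply/negP => /andP [_ /eqP Ex]; move: Hx; rewrite Ex dmkd //; lia.
apply/negP => /(shape Hk) [q [r [Hr [Ey [[r' [/andP [H1 H2] Ex]]|[H1 Ex]]]]]].
  by move: Hx Hy; rewrite Ex Ey !dmd //; lia.
by move: Hx Hy; rewrite Ex Ey dmkd // dmd //; lia.
Qed.

Lemma inblock k L (br : bool) i j j' : 0 < k -> (br -> i != L) -> j < j' <= k ->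
  ~~ ((j == 0) && (j' == k)) -> adjlt k L br (k*i+j) (k*i+j').
Proof.
move=> Hk Hb /andP [H1 H2] H3; have Hj : j < k by lia.
rewrite /adjlt dmd // dmm //.
have -> : br && (i == L) = false by case: br Hb => // /(_ isT) /negbTE.
by rewrite eqn_add2l H3; apply/andP; split; lia.
Qed.

Lemma brF k L (br : bool) a b : adjlt k L br a b -> (br -> a %/ k != L) -> adjlt k L false a b.
Proof. by case: br => //; rewrite adjlt_true => H /(_ isT) /negbTE Ha; rewrite Ha in H. Qed.

Lemma nbM k L (br : bool) i j u : 0 < k -> (br -> i != L) -> 0 < j < k ->
  adj k L br (k*i+j) u ->
  exists j' : 'I_k, u = (if val j' == j then k*i+k else k*i+val j').
Proof.
move=> Hk Hb /andP [Hj0 Hjk]; case/orP.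
  move/brF; rewrite dmd // => /(_ Hb) /(shape Hk) [q [r [Hr [/dmu E [[r' [/andP [H1 H2] ->]]|[H1 ->]]]]]].
    case: (E Hjk Hr) => ? ?; subst.
    have Hr'' : r' < k by [].
    by exists (Ordinal Hr''); rewrite /=; case: eqP => //; lia.
  case: (E Hjk Hr) => ? ?; subst.
  by exists (Ordinal Hjk); rewrite /= eqxx.
case Hu : (br && (u %/ k == L)).
  move: Hu => /andP [Hbt HuL]; rewrite Hbt adjlt_true HuL => /andP [_ /eqP E].
  by move: (f_equal (modn^~ k) E); rewrite dmm // dmkm; lia.
move/brF => /(_ _) H.
have {H} : adjlt k L false u (k*i+j).
  by apply: H => Hbt; move: Hu; rewrite Hbt /= => ->.
move/(shape Hk) => [q [r [Hr [-> [[r' [/andP [H1 H2] E]]|[H1 E]]]]]].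
  case: (dmu Hjk H2 E) => ? ?; subst.
  by exists (Ordinal Hr); rewrite /=; case: eqP => //; lia.
by move: (f_equal (modn^~ k) E); rewrite dmm // dmkm; lia.
Qed.

Lemma nbA k L u : 0 < k -> 0 < L -> adj k L true (k*L) u ->
  exists j' : 'I_k, u = if val j' == 0 then k*L+k else k*(L.-1) + val j'.
Proof.
move=> Hk HL; rewrite /adj !adjlt_true.
rewrite -[k*L]addn0 dmd // addn0 eqxx eqxx /=.
case/orP => [/eqP ->|]; first by exists (Ordinal Hk).
case: eqP => [_ /andP [/eqP -> /eqP]|_]; first by lia.
move/(shape Hk) => [q [r [Hr [-> [[r' [/andP [H1 H2] E]]|[H1 E]]]]]].
  by move: (f_equal (modn^~ k) E); rewrite dmm // -[k*L]addn0 dmm //; lia.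
have Eq : q = L.-1.
  by move: (f_equal (divn^~ k) E); rewrite dmkd // -[k*L]addn0 dmd //; lia.
by exists (Ordinal Hr); rewrite /= Eq; case: eqP => //; lia.
Qed.

Lemma pc_of_diff k c n (e : rel 'I_n) (gamma : 'I_n -> 'I_c) :
  (forall v u, e v u -> gamma u != gamma v) -> partial_coloring k e gamma.
Proof.
move=> H v; rewrite /degree.
have -> : [set u | e v u & gamma u != gamma v] = [set u | e v u].
  by apply/setP => u; rewrite !inE; case E: (e v u) => //=; rewrite (H _ _ E).
exact: geq_minr.
Qed.

Lemma smod k a : a < k -> a.+1 %% k = if a.+1 == k then 0 else a.+1.
Proof. by move=> H; case: eqP => [->|?]; [rewrite modnn | rewrite modn_small //; lia]. Qed.

Lemma diff1 k L x y : 0 < k -> adj k L false x y -> x %% k != y %% k.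
Proof.
move=> Hk.
suff H : forall a b, adjlt k L false a b -> a %% k != b %% k.
  by case/orP => /H //; rewrite eq_sym.
move=> a b /(shape Hk) [q [r [Hr [-> [[r' [/andP [H1 H2] ->]]|[H1 ->]]]]]].
  by rewrite !dmm //; lia.
by rewrite dmm // dmkm; lia.
Qed.

Lemma diff2 k L x y : 1 < k -> adj k L true x y ->
  (x %% k + (k*L < x)) %% k != (y %% k + (k*L < y)) %% k.
Proof.
move=> Hk1; have Hk : 0 < k by lia.
suff H : forall a b, adjlt k L true a b ->
  (a %% k + (k*L < a)) %% k != (b %% k + (k*L < b)) %% k.
  by case/orP => /H //; rewrite eq_sym.
move=> a b; rewrite adjlt_true; case: eqP => [_ /andP [/eqP -> /eqP ->]|Ha].
  rewrite -{1 3}[k*L]addn0 dmm // dmkm addn0 ltnn.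
  have -> : k * L < k * L + k by lia.
  by rewrite mod0n modn_small.
move/(shape Hk) => [q [r [Hr [Ea [[r' [/andP [H1 H2] Eb]]|[H1 Eb]]]]]];
  move: Ha; rewrite Ea dmd // => Hq; rewrite Eb.
- have [Hlt|Hgt] := ltnP q L.
    have -> : (k*L < k*q+r) = false by apply/negbTE; rewrite -leqNgt; nia.
    have -> : (k*L < k*q+r') = false by apply/negbTE; rewrite -leqNgt; nia.
    by rewrite !dmm // !addn0 !modn_small //; lia.
  have -> : (k*L < k*q+r) = true by apply/idP; nia.
  have -> : (k*L < k*q+r') = true by apply/idP; nia.
  rewrite !dmm // !addn1 !smod //.
  by case: (r.+1 =P k) => ?; case: (r'.+1 =P k) => ?; apply/eqP; lia.
- have [Hlt|Hgt] := ltnP q L.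
    have -> : (k*L < k*q+r) = false by apply/negbTE; rewrite -leqNgt; nia.
    have -> : (k*L < k*q+k) = false by apply/negbTE; rewrite -leqNgt; nia.
    by rewrite dmm // dmkm !addn0 mod0n !modn_small //; lia.
  have -> : (k*L < k*q+r) = true by apply/idP; nia.
  have -> : (k*L < k*q+k) = true by apply/idP; nia.
  rewrite dmm // dmkm !addn1 !smod //.
  by case: (r.+1 =P k) => ?; case: (1 =P k) => ?; apply/eqP; lia.
Qed.

Lemma degM k L (br : bool) m i j : 0 < k -> (br -> i != L) -> 0 < j < k ->
  k*i + j <= m -> degree (@E k L br m.+1) (inord (k*i+j)) <= k.
Proof.
move=> Hk Hb Hj Hm.
apply: (deg_le (g := fun j' : 'I_k => if val j' == j then k*i+k else k*i+val j')).
by move=> u; rewrite /E /= inordK //; apply: nbM.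
Qed.

Lemma block_eq k L (br : bool) m (gamma : 'I_m.+1 -> 'I_k) i : 0 < k ->
  partial_coloring k (@E k L br m.+1) gamma -> k*i+k <= m -> (br -> i != L) ->
  gamma (inord (k*i)) = gamma (inord (k*i+k)).
Proof.
move=> Hk Hpc Hm Hb; apply/eqP; apply/negPn/negP => Hne.
pose f : 'I_k.+1 -> 'I_k := fun j => gamma (inord (k*i + j)).
have Hlt : forall a b : 'I_k.+1, a < b -> f a != f b.
  move=> a b Hab.
  have Hbk : (b : nat) <= k by rewrite -ltnS.
  case Hs : ((a == 0 :> nat) && (b == k :> nat)).
    by move: Hs => /andP [/eqP Ha /eqP Hb']; rewrite /f Ha Hb' addn0.
  have Hed : adjlt k L br (k*i+a) (k*i+b).
    by apply: inblock => //; [rewrite Hab| rewrite Hs].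
  have [Ha0|Ha0] := posnP a.
    have Hb0 : 0 < b < k.
      apply/andP; split; first by lia.
      by move: Hs; rewrite Ha0 eqxx /= => /negbT; lia.
    have He : @E k L br m.+1 (inord (k*i+b)) (inord (k*i+a)).
      by rewrite /E /adj /= !inordK ?Hed ?orbT //; lia.
    by apply: (nb_diff Hpc (degM Hk Hb Hb0 _) He); lia.
  have Ha1 : 0 < a < k by apply/andP; split; lia.
  have He : @E k L br m.+1 (inord (k*i+a)) (inord (k*i+b)).
    by rewrite /E /adj /= !inordK ?Hed //; lia.
  by rewrite eq_sym; apply: (nb_diff Hpc (degM Hk Hb Ha1 _) He); lia.
have Hinj : injective f.
  move=> a b Hf; case: (ltngtP a b) => H.
  - by move: (Hlt _ _ H); rewrite Hf eqxx.
  - by move: (Hlt _ _ H); rewrite Hf eqxx.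
  - exact: val_inj.
by have := leq_card f Hinj; rewrite !card_ord ltnn.
Qed.

Lemma chain1 k L m (gamma : 'I_m.+1 -> 'I_k) : 0 < k -> m = k*(2*L) ->
  partial_coloring k (@E k L false m.+1) gamma ->
  forall i, i <= 2*L -> gamma (inord (k*i)) = gamma (inord 0).
Proof.
move=> Hk Hm Hpc; elim=> [|i IH] Hi; first by rewrite muln0.
rewrite mulnSr -(block_eq Hk Hpc) //; first by apply: IH; lia.
by rewrite Hm; nia.
Qed.

Lemma chain2a k L m (gamma : 'I_m.+1 -> 'I_k) : 0 < k -> m = k*(2*L) ->
  partial_coloring k (@E k L true m.+1) gamma ->
  forall i, i <= L -> gamma (inord (k*i)) = gamma (inord 0).
Proof.
move=> Hk Hm Hpc; elim=> [|i IH] Hi; first by rewrite muln0.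
rewrite mulnSr -(block_eq Hk Hpc) //; first by apply: IH; lia.
  by rewrite Hm; nia.
by move=> _; apply/eqP; lia.
Qed.

Lemma chain2b k L m (gamma : 'I_m.+1 -> 'I_k) : 0 < k -> m = k*(2*L) ->
  partial_coloring k (@E k L true m.+1) gamma ->
  forall i, L.+1 + i <= 2*L -> gamma (inord (k*(L.+1 + i))) = gamma (inord (k * L.+1)).
Proof.
move=> Hk Hm Hpc; elim=> [|i IH] Hi; first by rewrite addn0.
rewrite addnS mulnSr -(block_eq Hk Hpc) //; first by apply: IH; lia.
  by rewrite Hm; nia.
by move=> _; apply/eqP; lia.
Qed.

Lemma diffL k L m (gamma : 'I_m.+1 -> 'I_k) : 0 < k -> 0 < L -> m = k*(2*L) ->
  partial_coloring k (@E k L true m.+1) gamma ->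
  gamma (inord (k*L)) != gamma (inord (k*L.+1)).
Proof.
move=> Hk HL Hm Hpc.
have HkL : k*L < m.+1 by rewrite Hm; nia.
have HkL1 : k*L.+1 < m.+1 by rewrite Hm; nia.
have Hd : degree (@E k L true m.+1) (inord (k*L)) <= k.
  apply: (deg_le (g := fun j' : 'I_k => if val j' == 0 then k*L+k else k*(L.-1) + val j')).
  by move=> u; rewrite /E /= inordK //; apply: nbA.
have He : @E k L true m.+1 (inord (k*L)) (inord (k*L.+1)).
  rewrite /E /adj /= !inordK // adjlt_true -{1 3 4}[k*L]addn0 dmd // eqxx.
  by rewrite addn0 eqxx mulnSr eqxx.
by rewrite eq_sym; apply: (nb_diff Hpc Hd He).
Qed.

Lemma small_s k L s : 3 <= k -> 3 <= L -> 1 * k ^ 3 * s < (k*(2*L)).+1 -> s.+2 <= L.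
Proof.
move=> Hk HL; rewrite mul1n !expnS expn0 muln1 => H.
have H9 : 9 <= k * k by nia.
rewrite leqNgt; apply/negP => Hs.
have h1 : 9 * (k*s) <= k*k*(k*s) := leq_mul H9 (leqnn _).
have h2 : k*L <= k*(s.+1) by apply: leq_mul => //; lia.
have h3 : k * 2 <= k * s by apply: leq_mul => //; lia.
rewrite mulnS in h2.
have E1 : k*(k*k)*s = k*k*(k*s) by rewrite !mulnA.
lia.
Qed.

Lemma sym_E k L br m : symmetric (@E k L br m).
Proof. by move=> x y; rewrite /E /adj orbC. Qed.

Lemma irr_E k L br m : 0 < k -> irreflexive (@E k L br m).
Proof.
move=> Hk x; rewrite /E /adj orbb /adjlt.
case: (br && _); last by rewrite ltnn.
by apply/negbTE/negP => /andP [/eqP -> /eqP]; lia.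
Qed.

Lemma col_E1 k L m : 0 < k -> partially_colorable k k (@E k L false m).
Proof.
move=> Hk; exists (fun x => Ordinal (ltn_pmod (val x) Hk)).
apply: pc_of_diff => v u /(diff1 Hk) H; apply/negP => /eqP [] /eqP.
by rewrite eq_sym; apply/negP.
Qed.

Lemma col_E2 k L m : 1 < k -> partially_colorable k k (@E k L true m).
Proof.
move=> Hk1; have Hk : 0 < k by lia.
exists (fun x => Ordinal (ltn_pmod (val x %% k + (k*L < val x)) Hk)).
apply: pc_of_diff => v u /(diff2 Hk1) H; apply/negP => /eqP [] /eqP.
by rewrite eq_sym; apply/negP.
Qed.

Theorem theorem2 (k d : nat) (A : local_alg d k) :
  3 <= k -> 1 <= d -> solves_partial_coloring A ->
  exists c : nat, 0 < c /\
    forall N : nat, exists n : nat, N <= n /\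
      exists (e : rel 'I_n), [/\ symmetric e, irreflexive e & partially_colorable k k e] /\
      exists id : 'I_n -> idT d n, valid_ids id /\
      exists v : 'I_n,
        forall s : nat, c * k ^ 3 * s < n -> A n s (view_of e id s v) = None.
Proof.
move=> Hk3 Hd Hsol.
have Hk : 0 < k by lia.
have Hk1 : 1 < k by lia.
exists 1; split => // N.
pose L := N.+3.
have HL : 3 <= L by rewrite /L.
pose m := k*(2*L).
have Hm : m = k*(2*L) by [].
exists m.+1; split; first by rewrite /m /L; nia.
have HmN : m.+1 <= (m.+1)^d.
  by rewrite -{1}[m.+1]expn1 leq_pexp2l.
pose idf := fun v : 'I_m.+1 => (inord (val v).+1 : idT d m.+1).
have Hidv : forall v : 'I_m.+1, (idf v : nat) = (val v).+1.
  move=> v; rewrite /idf inordK // ltnS; exact: leq_trans (ltn_ord v) HmN.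
have Hid : valid_ids idf.
  split; last by move=> v; rewrite /= Hidv.
  by move=> a b /(f_equal (@nat_of_ord _)); rewrite !Hidv => [[]] /val_inj.
pose e1 := @E k L false m.+1.
pose e2 := @E k L true m.+1.
pose v0 : 'I_m.+1 := inord 0.
pose vE : 'I_m.+1 := inord m.
suff [v Hv] : exists v, forall s, 1 * k ^ 3 * s < m.+1 -> A m.+1 s (view_of e1 idf s v) = None.
  exists e1; split; first by split; [apply: sym_E | apply: irr_E | apply: col_E1].
  by exists idf; split => //; exists v.
case: (classic (forall s, 1*k^3*s < m.+1 -> A m.+1 s (view_of e1 idf s v0) = None)) => [H|H0].
  by exists v0.
case: (classic (forall s, 1*k^3*s < m.+1 -> A m.+1 s (view_of e1 idf s vE) = None)) => [H|HE].
  by exists vE.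
exfalso.
have [s0 [Hs0 Hs0']] : exists s, 1*k^3*s < m.+1 /\ A m.+1 s (view_of e1 idf s v0) <> None.
  apply: NNPP => Hn; apply: H0 => s Hs; apply: NNPP => Ha; apply: Hn; by exists s.
have [sE [HsE HsE']] : exists s, 1*k^3*s < m.+1 /\ A m.+1 s (view_of e1 idf s vE) <> None.
  apply: NNPP => Hn; apply: HE => s Hs; apply: NNPP => Ha; apply: Hn; by exists s.
have Hb0 := small_s Hk3 HL Hs0.
have HbE := small_s Hk3 HL HsE.
have S1 : symmetric e1 by apply: sym_E.
have S2 : symmetric e2 by apply: sym_E.
have I1 : irreflexive e1 by apply: irr_E.
have I2 : irreflexive e2 by apply: irr_E.
have C1 : partially_colorable k k e1 by apply: col_E1.
have C2 : partially_colorable k k e2 by apply: col_E2.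
have [g1 [Hpc1 Ho1]] := Hsol m.+1 e1 S1 I1 C1 idf Hid.
have [g2 [Hpc2 Ho2]] := Hsol m.+1 e2 S2 I2 C2 idf Hid.
have Hag : forall x y : 'I_m.+1, val x %/ k < L \/ L.+2 <= val x %/ k -> e1 x y = e2 x y.
  by move=> x y Hx; rewrite /e1 /e2 /E; apply: agree.
have Hv0 : forall r, r <= s0 -> view_of e1 idf r v0 = view_of e2 idf r v0.
  move=> r Hr; apply: (view_eq (S := [set x : 'I_m.+1 | val x %/ k < L])).
    by move=> x y; rewrite inE => Hx; apply: Hag; left.
  apply/subsetP => u Hu; rewrite inE.
  have He : forall x y, e1 x y -> (fun u : 'I_m.+1 => val u %/ k) y <= ((fun u : 'I_m.+1 => val u %/ k) x).+1.
    by move=> x y /(blk_close Hk) [].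
  have := ball_pot He Hu; rewrite /v0 /= inordK // div0n; lia.
have HvE : forall r, r <= sE -> view_of e1 idf r vE = view_of e2 idf r vE.
  move=> r Hr; apply: (view_eq (S := [set x : 'I_m.+1 | L.+2 <= val x %/ k])).
    by move=> x y; rewrite inE => Hx; apply: Hag; right.
  apply/subsetP => u Hu; rewrite inE.
  have He : forall x y, e1 x y -> (fun u : 'I_m.+1 => 2*L - val u %/ k) y <= ((fun u : 'I_m.+1 => 2*L - val u %/ k) x).+1.
    by move=> x y /(blk_close Hk) [] _ /=; lia.
  have := ball_pot He Hu; have Hmk : m %/ k = 2*L by rewrite Hm mulKn.
  rewrite /vE /= inordK // Hmk; lia.
have [t1 Ht1] := Ho1 v0. have [t2 Ht2] := Ho2 v0.
have Eq0 := same_out Hv0 Hs0' Ht1 Ht2.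
have [t3 Ht3] := Ho1 vE. have [t4 Ht4] := Ho2 vE.
have EqE := same_out HvE HsE' Ht3 Ht4.
have F1 : g1 vE = g1 v0 by have := chain1 Hk Hm Hpc1 (leqnn (2*L)); rewrite -Hm.
have F2a : g2 (inord (k*L)) = g2 v0 := chain2a Hk Hm Hpc2 (leqnn L).
have F2b : g2 (inord (k*(L.+1 + L.-1))) = g2 (inord (k*L.+1)).
  by apply: (chain2b Hk Hm Hpc2); lia.
have HE2 : k * (L.+1 + L.-1) = m by rewrite Hm; congr (k * _); lia.
rewrite HE2 -/vE in F2b.
have := diffL Hk (ltn_trans _ HL) Hm Hpc2.
by rewrite F2a -F2b -EqE F1 Eq0 eqxx => /(_ isT).
Qed.
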